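(* Let $\mathbb{F}_4=\{0,1,\omega,\omega+1\}$ be the field with four elements, where $\omega^2=\omega+1$. The irreducible $\lambda$-quiddities over $\mathbb{F}_4$ are exactly, up to cyclic permutation, the following tuples: - $(1,1,1)$; - $(0,0,0,0)$, $(0,\omega,0,\omega)$, $(0,\omega+1,0,\omega+1)$; - $(\omega,\omega,\omega,\omega,\omega)$, $(\omega+1,\omega+1,\omega+1,\omega+1,\omega+1)$; - $(\omega,\omega+1,\omega,\omega+1,\omega,\omega+1)$; - $(\omega,\omega,\omega+1,\omega+1,\omega,\omega,\omega+1,\omega+1)$; - $(\omega,\omega,\omega+1,\omega,\omega,\omega+1,\omega,\omega,\omega+1)$ and $(\omega+1,\omega+1,\omega,\omega+1,\omega+1,\omega,\omega+1,\omega+1,\omega)$.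
   Context: All rings are commutative with unit. For $a_1,\ldots,a_n\in A$, $M_n(a_1,\ldots,a_n)=\begin{pmatrix}a_n&-1\\1&0\end{pmatrix}\cdots\begin{pmatrix}a_1&-1\\1&0\end{pmatrix}$. An $n$-tuple $(a_1,\ldots,a_n)\in A^n$ is a $\lambda$-quiddity over $A$ if $M_n(a_1,\ldots,a_n)=\pm\mathrm{Id}$. For $(a_1,\ldots,a_n)\in A^n$, $(b_1,\ldots,b_m)\in A^m$, define $(a_1,\ldots,a_n)\oplus(b_1,\ldots,b_m)=(a_1+b_m,a_2,\ldots,a_{n-1},a_n+b_1,b_2,\ldots,b_{m-1})$. Write $(a_1,\ldots,a_n)\sim(b_1,\ldots,b_n)$ if $(b_1,\ldots,b_n)$ is obtained from $(a_1,\ldots,a_n)$ or from $(a_n,\ldots,a_1)$ by a cyclic permutation. A $\lambda$-quiddity $(c_1,\ldots,c_n)$ with $n\ge3$ is reducible if there exist a $\lambda$-quiddity $(b_1,\ldots,b_l)$ and a tuple $(a_1,\ldots,a_m)$ with $l,m\ge3$ and $(c_1,\ldots,c_n)\sim(a_1,\ldots,a_m)\oplus(b_1,\ldots,b_l)$; it is irreducible otherwise (by convention $(0,0)$ is reducible). *)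

(* Defs.v *)
From HB Require Import structures.
From mathcomp Require Import all_boot all_order all_algebra all_field.
Set Implicit Arguments. Unset Strict Implicit. Unset Printing Implicit Defensive.
Import GRing.Theory.
Local Open Scope ring_scope.

Section Quiddity.
Variable R : comNzRingType.

Definition qmat (a : R) : 'M[R]_2 :=
  \matrix_(i < 2, j < 2)
     if i == 0 :> nat then (if j == 0 :> nat then a else -1)
     else (if j == 0 :> nat then 1 else 0).

(* M_n(a_1,...,a_n) = qmat a_n * ... * qmat a_1. *)
Definition Mq (s : seq R) : 'M[R]_2 := foldl (fun M x => qmat x * M) 1 s.

Definition lambda_quiddity (s : seq R) : Prop := Mq s = 1 \/ Mq s = - 1.

(* (a_1..a_n) (+) (b_1..b_m) = (a_1+b_m, a_2..a_{n-1}, a_n+b_1, b_2..b_{m-1}) *)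
Definition qoplus (a b : seq R) : seq R :=
  [:: nth 0 a 0 + nth 0 b (size b).-1]
  ++ drop 1 (take (size a).-1 a)
  ++ [:: nth 0 a (size a).-1 + nth 0 b 0]
  ++ drop 1 (take (size b).-1 b).

Definition qsim (c d : seq R) : Prop :=
  exists k, d = rot k c \/ d = rot k (rev c).

Definition reducible (c : seq R) : Prop :=
  (c = [:: 0; 0]) \/
  (3 <= size c)%N /\
  exists a b : seq R, lambda_quiddity b /\ (3 <= size b)%N /\ (3 <= size a)%N /\
    qsim c (qoplus a b).

Definition irreducible_quiddity (c : seq R) : Prop :=
  lambda_quiddity c /\ (3 <= size c)%N /\ ~ reducible c.

End Quiddity.

(* Main.v *)
Require Import Defs.
From HB Require Import structures.
From mathcomp Require Import all_boot all_order all_algebra all_field.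
From mathcomp Require Import zify ring.
Set Implicit Arguments. Unset Strict Implicit.
Import GRing.Theory.

(* Concrete model of F_4 as bool * bool: (a, b) stands for a + b w. *)

Definition f4 := (bool * bool)%type.
Definition z4 : f4 := (false,false).
Definition o4 : f4 := (true,false).
Definition w4 : f4 := (false,true).
Definition v4 : f4 := (true,true).
Definition fadd (x y : f4) : f4 := (x.1 (+) y.1, x.2 (+) y.2).
Definition fmul (x y : f4) : f4 :=
  ((x.1 && y.1) (+) (x.2 && y.2), (x.1 && y.2) (+) (x.2 && y.1) (+) (x.2 && y.2)).
Definition m4 := (f4 * f4 * f4 * f4)%type.
Definition mmul (A B : m4) : m4 :=
  let: (a,b,c,d) := A in let: (e,f,g,h) := B in
  (fadd (fmul a e) (fmul b g), fadd (fmul a f) (fmul b h),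
   fadd (fmul c e) (fmul d g), fadd (fmul c f) (fmul d h)).
Definition mid : m4 := (o4,z4,z4,o4).
Definition qm (x : f4) : m4 := (x, o4, o4, z4).
Definition Mqc (s : seq f4) := foldl (fun M x => mmul (qm x) M) mid s.
Definition lqc s := Mqc s == mid.
Definition E4 := [:: z4; o4; w4; v4].
Lemma mem_E4 x : x \in E4. Proof. by case: x => [[] []]. Qed.

Definition tl : seq (seq f4) :=
  [:: [:: o4; o4; o4];
      [:: z4; z4; z4; z4]; [:: z4; w4; z4; w4]; [:: z4; v4; z4; v4];
      [:: w4; w4; w4; w4; w4]; [:: v4; v4; v4; v4; v4];
      [:: w4; v4; w4; v4; w4; v4];
      [:: w4; w4; v4; v4; w4; w4; v4; v4];
      [:: w4; w4; v4; w4; w4; v4; w4; w4; v4];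
      [:: v4; v4; w4; v4; v4; w4; v4; v4; w4]].

Definition WB : seq (seq f4) :=
  flatten [seq [seq rot k t | k <- iota 0 (size t)] | t <- tl].
Definition midw (b : seq f4) := take (size b - 2) (behead b).

Definition cycw s := has (fun k => has (fun b => (size (midw b) + 3 <= size s)
   && suffix (midw b) (rot k s)) WB) (iota 0 (size s)).
Definition inlst s := has (fun t => has (fun k => s == rot k t) (iota 0 (size t))) tl.
Fixpoint allseq n : seq (seq f4) :=
  if n is n'.+1 then flatten [seq [seq x :: s | s <- allseq n'] | x <- E4] else [:: [::]].

Definition linw s := has (fun b => infix (midw b) s) WB.
Fixpoint chk (k : nat) (p : seq f4) : bool :=
  if linw p then true else (if k is k'.+1 then all (fun x => chk k' (rcons p x)) E4 else false).

Definition dl (s : seq f4) := [seq rot k s | k <- iota 0 (size s)] ++ [seq rot k (rev s) | k <- iota 0 (size s)].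
Definition redb (s : seq f4) :=
  has (fun d => has (fun m => has (fun p => has (fun q => lqc (p :: rcons (drop m d) q)) E4) E4)
     (iota 3 (size s - 3))) (dl s).

Lemma WB_ok : all (fun b => [&& lqc b, b == head z4 b :: rcons (midw b) (last z4 b),
    0 < size (midw b) & size (midw b) <= 7]) WB.
Proof. by vm_compute. Qed.
Lemma tl_ok : all (fun t => (3 <= size t) && all (fun k => lqc (rot k t) && ~~ redb (rot k t)) (iota 0 (size t))) tl.
Proof. by vm_compute. Qed.
Lemma chk_ok : chk 10 [::].
Proof. by vm_compute. Qed.
Lemma small_ok : all (fun n => all (fun s => if lqc s then (if inlst s then true else cycw s) else true) (allseq n)) (iota 3 7).
Proof. by vm_compute. Qed.

Lemma fadd_K x y : fadd (fadd x y) y = x.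
Proof. by case: x y => [[] []] [[] []]. Qed.

Definition qoplusc (a b : seq f4) : seq f4 :=
  [:: fadd (nth z4 a 0) (nth z4 b (size b).-1)]
  ++ drop 1 (take (size a).-1 a)
  ++ [:: fadd (nth z4 a (size a).-1) (nth z4 b 0)]
  ++ drop 1 (take (size b).-1 b).
Definition qsimc (c d : seq f4) : Prop := exists k, d = rot k c \/ d = rot k (rev c).
Definition reducc (c : seq f4) : Prop :=
  (c = [:: z4; z4]) \/ (3 <= size c) /\
  exists a b, lqc b /\ 3 <= size b /\ 3 <= size a /\ qsimc c (qoplusc a b).
Definition irrc c := lqc c /\ 3 <= size c /\ ~ reducc c.

Lemma qoplusc_shape x a' y p b' q :
  qoplusc (x :: rcons a' y) (p :: rcons b' q) = fadd x q :: a' ++ fadd y p :: b'.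
Proof.
rewrite /qoplusc /= !size_rcons /= !nth_rcons !ltnn !eqxx.
by rewrite -!cats1 !take_size_cat ?drop0.
Qed.

Lemma win_red s k rest u b p q : lqc b -> b = p :: rcons u q -> 0 < size u ->
  rot k s = rest ++ u -> 3 <= size rest -> reducc s.
Proof.
move=> hb eb hu hr hs; right; split.
  by rewrite -(size_rot k) hr size_cat (leq_trans hs) ?leq_addr.
case: rest hr hs => [|r0 r1] // hr hs.
have : r1 != [::] by case: r1 hs {hr}.
case/lastP: r1 hr hs => [|r' rl] // hr hs _.
exists (fadd r0 q :: rcons r' (fadd rl p)), b; split=> //.
split; first by rewrite eb /= size_rcons.
split; first by move: hs; rewrite /= !size_rcons.
exists k; left; rewrite eb qoplusc_shape !fadd_K hr /=.
by rewrite -cats1 -catA.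
Qed.

Lemma WB_red s k b : b \in WB -> size (midw b) + 3 <= size s ->
  suffix (midw b) (rot k s) -> reducc s.
Proof.
move=> hb hsz /suffixP [rest hr].
have /allP/(_ b hb)/and4P[hl /eqP eb hu _] := WB_ok.
have := win_red hl eb hu hr. apply.
by move: hsz; rewrite -(size_rot k s) hr size_cat addnC leq_add2r.
Qed.

Lemma cycw_red s : cycw s -> reducc s.
Proof.
case/hasP=> k _ /hasP [b hb /andP [hsz hsuf]].
exact: WB_red hb hsz hsuf.
Qed.

Lemma chk0 p : chk 0 p = if linw p then true else false. Proof. by []. Qed.
Lemma chkS k p : chk k.+1 p = if linw p then true else all (fun x => chk k (rcons p x)) E4.
Proof. by []. Qed.

Lemma chk_sound k p : chk k p -> forall t, size t = k -> linw (p ++ t).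
Proof.
elim: k p => [|k IH] p.
  rewrite chk0; case: ifP => // hp _ t /size0nil ->; by rewrite cats0.
rewrite chkS; case: ifP => [hp _ t _|_ ha [|x t] //= [ht]].
  by case/hasP: hp => b hb hi; apply/hasP; exists b => //; exact: infix_catr.
rewrite -cat_rcons; apply: IH => //.
by move/allP: ha; apply; exact: mem_E4.
Qed.

Lemma big_red s : 10 <= size s -> reducc s.
Proof.
move=> hs.
have := chk_sound chk_ok (t := take 10 s); rewrite size_takel // => /(_ erefl) /=.
case/hasP=> b hb /(infix_catr (drop 10 s)); rewrite cat_take_drop.
case/infixP=> x [y es]; rewrite es in hs *.
have /allP/(_ b hb)/and4P[_ _ _ h7] := WB_ok.
apply: (WB_red (k := size (x ++ midw b)) hb).
  by move: hs; rewrite !size_cat; lia.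
by rewrite catA rot_size_cat; apply/suffixP; exists (y ++ x); rewrite catA.
Qed.

Lemma rot_in (s : seq f4) k : 0 < size s -> rot k s \in [seq rot i s | i <- iota 0 (size s)].
Proof.
move=> hs; case: (ltnP k (size s)) => hk.
  by apply: map_f; rewrite mem_iota.
by rewrite rot_oversize // -{1}(rot0 s); apply: map_f; rewrite mem_iota.
Qed.

Lemma red_redb s : 3 <= size s -> reducc s -> redb s.
Proof.
move=> hs [es|[_ [a [b [hb [hlb [hla [k hk]]]]]]]]; first by rewrite es in hs.
case: a hla hk => [|x a1] // hla; case/lastP: a1 hla => [|a' y] // hla.
case: b hb hlb => [|p b1] // hb hlb; case/lastP: b1 hb hlb => [|b' q] // hb hlb.
move: hla hlb; rewrite /= !size_rcons !ltnS => hla hlb.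
rewrite qoplusc_shape => hk.
have hsd : size s = (size a').+2 + size b'.
  case: hk => /(congr1 size); rewrite ?size_rot ?size_rev /= size_cat /= => <-; lia.
apply/hasP; exists (fadd x q :: a' ++ fadd y p :: b').
  rewrite mem_cat; apply/orP; case: hk => ->; [left|right].
    by apply: rot_in; rewrite (leq_trans _ hs).
  by rewrite -(size_rev s); apply: rot_in; rewrite size_rev (leq_trans _ hs).
apply/hasP; exists (size a').+2.
  rewrite mem_iota; apply/andP; split.
    by rewrite ltnS.
  rewrite hsd; lia.
apply/hasP; exists p; first exact: mem_E4.
apply/hasP; exists q; first exact: mem_E4.
suff -> : drop (size a').+2 (fadd x q :: a' ++ fadd y p :: b') = b' by [].
by elim: (a') => //= *; rewrite drop0.
Qed.

Lemma mem_allseq s : s \in allseq (size s).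
Proof.
elim: s => [|x s IH] //=.
exact: (allpairs_f (fun a b => a :: b) (mem_E4 x) IH).
Qed.

Lemma main_c c : irrc c <-> exists2 t, t \in tl & exists k, c = rot k t.
Proof.
split.
  case=> hl [hs hn]; case: (leqP 10 (size c)) => hc.
    by case: hn; apply: big_red.
  have /allP/(_ (size c)) := small_ok.
  rewrite mem_iota hs /= => /(_ (leq_trans hc _) ) /= /(_ isT) /allP /(_ c (mem_allseq c)).
  rewrite hl; case: ifP => [/hasP [t ht /hasP [k _ /eqP ->]] _|_ /cycw_red //].
  by exists t => //; exists k.
case=> t ht [k ->].
have /allP/(_ t ht)/andP [hs /allP hk] := tl_ok.
wlog hkt : k / k < size t.
  move=> H; case: (ltnP k (size t)) => hk'; first exact: H.
  by rewrite rot_oversize // -(rot0 t); apply: H; apply: leq_trans hs.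
have : k \in iota 0 (size t) by rewrite mem_iota.
move/hk/andP => [hl hr].
split=> //; split; first by rewrite size_rot.
by move/(red_redb _); rewrite size_rot hs => /(_ isT); apply/negP.
Qed.

Local Open Scope ring_scope.

Section Transfer.
Variables (F : finFieldType) (hF : #|F| = 4%N) (w : F) (hw : w ^+ 2 = w + 1).

Lemma one_neq0 : (1 : F) != 0. Proof. exact: oner_neq0. Qed.

Lemma w_neq0 : w != 0.
Proof. apply/eqP => h; move: hw; rewrite h expr2 mul0r add0r => /esym/eqP; by rewrite oner_eq0. Qed.
Lemma w_neq1 : w != 1.
Proof.
apply/eqP => h; move: hw; rewrite h expr1n => /eqP; rewrite -subr_eq0.
by rewrite opprD addrA subrr sub0r oppr_eq0 oner_eq0.
Qed.
Lemma w1_neq0 : w + 1 != 0.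
Proof.
apply/eqP => h; have hw' : w = -1 by apply/eqP; rewrite -subr_eq0 opprK h.
by move: hw; rewrite h hw' expr2 mulrNN mulr1 => /eqP; rewrite oner_eq0.
Qed.

Lemma w1_neq1 : w + 1 != 1.
Proof. by rewrite -subr_eq0 addrK w_neq0. Qed.
Lemma w1_neqw : w + 1 != w.
Proof. by rewrite -subr_eq0 addrAC subrr add0r one_neq0. Qed.

Definition dfacts := (negPf one_neq0, negPf w_neq0, negPf w1_neq0, negPf w_neq1,
  negPf w1_neq1, negPf w1_neqw).

Lemma uniqS : uniq [:: 0; 1; w; w + 1].
Proof.
rewrite /= !inE !(eq_sym 0) !(eq_sym 1 w) !(eq_sym 1 (w + 1)) !(eq_sym w (w + 1)).
by rewrite !dfacts.
Qed.

Lemma exhaust (x : F) : x \in [:: 0; 1; w; w + 1].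
Proof.
apply/negPn/negP => hx.
have : uniq (x :: [:: 0; 1; w; w + 1]) by rewrite cons_uniq hx uniqS.
move/uniq_leq_size => /(_ (enum F)) h.
have : (5 <= size (enum F))%N by apply: h => y _; rewrite mem_enum.
by rewrite -cardT hF.
Qed.

Lemma two0 : (1 + 1 : F) = 0.
Proof.
have := exhaust (1 + 1); rewrite !inE => /or4P [/eqP //| /eqP h | /eqP h | /eqP h].
- have : (1 : F) = 0 by rewrite -[in RHS](subrr 1) -[X in X - 1]h addrK.
  by move/eqP; rewrite oner_eq0.
- move: hw; rewrite -h => /eqP; rewrite -subr_eq0.
  have -> : (1 + 1) ^+ 2 - (1 + 1 + 1) = 1 :> F by ring.
  by rewrite oner_eq0.
- have : w = 1 by apply: (addIr 1); rewrite -h.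
  by move/eqP; rewrite (negPf w_neq1).
Qed.

Lemma m1 : (-1 : F) = 1.
Proof. by apply/eqP; rewrite -subr_eq0 -opprD two0 oppr0. Qed.

Lemma addxx (x : F) : x + x = 0.
Proof. by rewrite -{1 2}(mul1r x) -mulrDl two0 mul0r. Qed.

Definition bF (b : bool) : F := if b then 1 else 0.
Definition phi (x : f4) : F :=
  match x with
  | (false, false) => 0 | (true, false) => 1 | (false, true) => w | (true, true) => w + 1
  end.
Lemma phiE x : phi x = bF x.1 + bF x.2 * w.
Proof.
case: x => [[] []] /=; rewrite ?mul1r ?mul0r ?addr0 ?add0r //; exact: addrC.
Qed.
Lemma bF_add a b : bF (a (+) b) = bF a + bF b.
Proof. case: a b => [] [] /=; by rewrite ?addr0 ?add0r ?two0. Qed.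
Lemma bF_mul a b : bF (a && b) = bF a * bF b.
Proof. case: a b => [] [] /=; by rewrite ?mulr0 ?mul0r ?mulr1. Qed.

Lemma phi_add x y : phi (fadd x y) = phi x + phi y.
Proof. rewrite !phiE /fadd /= !bF_add; ring. Qed.

Lemma phi_mul x y : phi (fmul x y) = phi x * phi y.
Proof.
rewrite !phiE /fmul /= !bF_add !bF_mul.
have -> : (bF x.1 + bF x.2 * w) * (bF y.1 + bF y.2 * w) =
  bF x.1 * bF y.1 + (bF x.1 * bF y.2 + bF x.2 * bF y.1) * w + bF x.2 * bF y.2 * w ^+ 2 by ring.
rewrite hw.
have -> : bF x.1 * bF y.1 + bF x.2 * bF y.2 + (bF x.1 * bF y.2 + bF x.2 * bF y.1 + bF x.2 * bF y.2) * w
  = bF x.1 * bF y.1 + (bF x.1 * bF y.2 + bF x.2 * bF y.1) * w + bF x.2 * bF y.2 * (w + 1) by ring.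
by [].
Qed.

Lemma phi0 : phi z4 = 0. Proof. by []. Qed.

Lemma phi_inj : injective phi.
Proof.
move=> [[] []] [[] []] //= /eqP;
  by rewrite ?(eq_sym 0) ?(eq_sym 1 w) ?(eq_sym 1 (w + 1)) ?(eq_sym w (w + 1)) ?dfacts.
Qed.

Lemma phi_surj (x : F) : exists y, x = phi y.
Proof.
have := exhaust x; rewrite !inE => /or4P [] /eqP ->.
- by exists z4. - by exists o4. - by exists w4. - by exists v4.
Qed.

Lemma seq_surj (c : seq F) : exists s, c = map phi s.
Proof.
elim: c => [|x c [s ->]]; first by exists [::].
by have [y ->] := phi_surj x; exists (y :: s).
Qed.


Definition mxphi (A : m4) : 'M[F]_2 :=
  let: (a, b, c, d) := A in
  \matrix_(i < 2, j < 2) if i == 0 :> nat then (if j == 0 :> nat then phi a else phi b)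
                         else (if j == 0 :> nat then phi c else phi d).

Arguments phi : simpl never.
Arguments fadd : simpl never.
Arguments fmul : simpl never.
Arguments mmul : simpl never.
Arguments qm : simpl never.

Lemma qmat_phi x : qmat (phi x) = mxphi (qm x).
Proof. by apply/matrixP => i j; rewrite !mxE /= m1. Qed.

Lemma mxphi_mul A B : mxphi (mmul A B) = mxphi A * mxphi B.
Proof.
case: A => [[[a b] c] d]; case: B => [[[e f] g] h].
apply/matrixP => i j; rewrite -mulmxE !mxE !big_ord_recl big_ord0 !mxE /=.
by case: i => [[|[|i]] hi]; case: j => [[|[|j]] hj] //=; rewrite !phi_add !phi_mul addr0.
Qed.

Lemma mxphi_id : mxphi mid = 1.
Proof.
apply/matrixP => i j; rewrite !mxE /=.
by case: i => [[|[|i]] hi]; case: j => [[|[|j]] hj].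
Qed.

Lemma mxphi_inj A B : mxphi A = mxphi B -> A = B.
Proof.
case: A => [[[a b] c] d]; case: B => [[[e f] g] h] /matrixP hm.
have := hm 0 0; have := hm 0 1; have := hm 1 0; have := hm 1 1; rewrite !mxE /=.
by move=> /phi_inj -> /phi_inj -> /phi_inj -> /phi_inj ->.
Qed.

Lemma Mq_map s : Mq (map phi s) = mxphi (Mqc s).
Proof.
rewrite /Mq /Mqc -mxphi_id; elim: s mid => [|x s IH] M //=.
by rewrite -IH qmat_phi mxphi_mul.
Qed.

Lemma Mneg : - (1 : 'M[F]_2) = 1.
Proof.
apply/matrixP => i j; rewrite !mxE.
by case: (i == j); rewrite ?mulr1n ?mulr0n ?m1 ?oppr0.
Qed.

Lemma lq_tr s : lambda_quiddity (map phi s) <-> lqc s.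
Proof.
rewrite /lambda_quiddity /lqc Mneg Mq_map -mxphi_id; split.
  by case=> /mxphi_inj ->.
by move/eqP => ->; left.
Qed.

Lemma nth_phi a i : nth 0 (map phi a) i = phi (nth z4 a i).
Proof. by elim: a i => [|x a IH] [|i] //=. Qed.

Lemma qoplus_tr a b : qoplus (map phi a) (map phi b) = map phi (qoplusc a b).
Proof.
rewrite /qoplus /qoplusc !size_map !map_cat /= !map_drop !map_take !phi_add !nth_phi.
by [].
Qed.

Lemma qsim_tr c d : qsim (map phi c) (map phi d) <-> qsimc c d.
Proof.
split=> -[k h]; exists k.
  by rewrite -map_rev -!map_rot in h; case: h => /(inj_map phi_inj) ->; [left|right].
by rewrite -map_rev -!map_rot; case: h => ->; [left|right].
Qed.

Lemma red_tr s : reducible (map phi s) <-> reducc s.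
Proof.
split.
  case=> [h | [hs [a [b [hb [hlb [hla hq]]]]]]].
    by left; apply: (inj_map phi_inj); rewrite h.
  right; split; first by rewrite size_map in hs.
  have [a' ea] := seq_surj a; have [b' eb] := seq_surj b; subst a b.
  exists a', b'; rewrite !size_map in hlb hla; split; first by apply/lq_tr.
  by do 2 (split => //); apply/qsim_tr; rewrite -qoplus_tr.
case=> [-> | [hs [a [b [hb [hlb [hla hq]]]]]]]; first by left.
right; split; first by rewrite size_map.
exists (map phi a), (map phi b); rewrite !size_map; split; first by apply/lq_tr.
by do 2 (split => //); rewrite qoplus_tr; apply/qsim_tr.
Qed.

Lemma irr_tr s : irreducible_quiddity (map phi s) <-> irrc s.
Proof.
rewrite /irreducible_quiddity /irrc size_map; split.
  by case=> /lq_tr h1 [h2 h3]; split=> //; split=> // /red_tr.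
by case=> /lq_tr h1 [h2 h3]; split=> //; split=> // /red_tr.
Qed.

Lemma Lmap : [:: [:: 1; 1; 1];
        [:: 0; 0; 0; 0]; [:: 0; w; 0; w]; [:: 0; w + 1; 0; w + 1];
        [:: w; w; w; w; w]; [:: w + 1; w + 1; w + 1; w + 1; w + 1];
        [:: w; w + 1; w; w + 1; w; w + 1];
        [:: w; w; w + 1; w + 1; w; w; w + 1; w + 1];
        [:: w; w; w + 1; w; w; w + 1; w; w; w + 1];
        [:: w + 1; w + 1; w; w + 1; w + 1; w; w + 1; w + 1; w]] = map (map phi) tl.
Proof. by []. Qed.

End Transfer.

Theorem theorem2p7 (F : finFieldType) (hF : #|F| = 4%N) (w : F)
  (hw : w ^+ 2 = w + 1) (c : seq F) :
  irreducible_quiddity c <->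
  exists2 t, t \in
    [:: [:: 1; 1; 1];
        [:: 0; 0; 0; 0]; [:: 0; w; 0; w]; [:: 0; w + 1; 0; w + 1];
        [:: w; w; w; w; w]; [:: w + 1; w + 1; w + 1; w + 1; w + 1];
        [:: w; w + 1; w; w + 1; w; w + 1];
        [:: w; w; w + 1; w + 1; w; w; w + 1; w + 1];
        [:: w; w; w + 1; w; w; w + 1; w; w; w + 1];
        [:: w + 1; w + 1; w; w + 1; w + 1; w; w + 1; w + 1; w]]
  & exists k, c = rot k t.
Proof.
have [s ->] := seq_surj hF hw c.
rewrite Lmap irr_tr // main_c; split.
  case=> t ht [k ->]; exists (map (phi w) t); first exact: map_f.
  by exists k; rewrite map_rot.
case=> t /mapP [t' ht' ->] [k]; rewrite -map_rot => /(inj_map (phi_inj hw)) ->.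
by exists t' => //; exists k.
Qed.
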